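(* Let $\Psi=\langle\Pi,f\rangle$ be an identified decomposable minimization or maximization problem with decomposition function $\lambda$, let $\alpha\ge1$, suppose $\Pi$ admits a feasibility scheme with proof size $p$, and suppose $\Psi$ admits an $\alpha$-ADPLS (for every $k\in\mathbb Z$) with proof size $r$. Then there exists an $\alpha$-APLS for $\Psi$ with proof size $O(p+r+\log n+H)$, where $H$ is the maximum number of bits needed to represent $\lambda(\mathsf I(v),\mathsf O(v))$ over $v\in V$.
   Context: All graphs are finite, connected and undirected, $G=(V,E)$, $n=|V|$, $N(v)$ is the set of neighbors of $v$; each node distinguishes its incident edges by port numbers. An input assignment $\mathsf{I}:V\to\{0,1\}^*$ and an output assignment $\mathsf{O}:V\to\{0,1\}^*$ give each node a local input and a local output. A configuration graph is a pair $\langle G,S\rangle$ with $S:V\to\{0,1\}^*$; an input graph $\langle G,\mathsf I\rangle$ and an IO graph $\langle G,\mathsf I,\mathsf O\rangle$ (with $S(v)=\mathsf I(v)\cdot\mathsf O(v)$) are configuration graphs. Given a universe $\mathcal U$ of configuration graphs and disjoint families $\mathcal F_Y,\mathcal F_N\subseteq\mathcal U$, a gap proof labeling scheme (GPLS) consists of a prover which, given a configuration graph in $\mathcal F_Y$, assigns a label $L(v)\in\{0,1\}^*$ to every node, and a verifier which at each node $v$ receives only $\langle S(v),L(v),L^N(v)\rangle$, where $L^N(v)$ is the vector of labels of $v$'s neighbors (indexed by port), and outputs True or False; the verifier accepts if all nodes output True and rejects otherwise. The GPLS is correct if (i) for every configuration graph in $\mathcal F_Y$ the verifier accepts under the prover's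 labels, and (ii) for every configuration graph in $\mathcal F_N$ the verifier rejects under every label assignment. Its proof size is the maximum label length assigned by the prover over $\mathcal F_Y$. A distributed graph optimization problem $\Psi=\langle\Pi,f\rangle$ consists of a set $\Pi$ of IO graphs and an integer-valued objective $f$ on $\Pi$; $\langle G,\mathsf I\rangle$ is legal if some $\mathsf O$ has $\langle G,\mathsf I,\mathsf O\rangle\in\Pi$ (a feasible solution); $OPT_\Psi(G,\mathsf I)$ is the infimum (minimization) or supremum (maximization) of $f$ over feasible solutions. A feasibility scheme for $\Pi$ is a GPLS over $\{\langle G,\mathsf I,\mathsf O\rangle:\langle G,\mathsf I\rangle\text{ legal}\}$ with $\mathcal F_Y=\Pi$ and $\mathcal F_N$ its complement in that universe. An $\alpha$-APLS for $\Psi$ ($\alpha\ge1$) is a GPLS over $\mathcal U=\{\langle G,\mathsf I,\mathsf O\rangle:\langle G,\mathsf I\rangle\text{ legal}\}$ with $\mathcal F_Y$ the IO graphs in $\Pi$ with $f=OPT_\Psi(G,\mathsf I)$, and $\mathcal F_N$ equal to $\mathcal U$ minus the IO graphs in $\Pi$ with $f\le\alpha\cdot OPT_\Psi(G,\mathsf I)$ (minimization) resp. $f\ge OPT_\Psi(G,\mathsf I)/\alpha$ (maximization). For $k\in\mathbb Z$, an $\alpha$-ADPLS for $\Psi$ and $k$ is a GPLS over the legal input graphs with $\mathcal F_Y=\{OPT_\Psi\ge k\}$, $\mathcal F_N=\{OPT_\Psi<k/\alpha\}$ (minimization), resp. $\mathcal F_Y=\{OPT_\Psi\le k\}$, $\mathcal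 F_N=\{OPT_\Psi>\alpha k\}$ (maximization); ''$\Psi$ admits an $\alpha$-ADPLS with proof size $r$'' means for every $k$ there is one with proof size at most $r$. $\Psi$ is identified if in every IO graph the input assignment encodes at each node a unique identifier of $O(\log n)$ bits. $\Psi$ is decomposable with decomposition function $\lambda:\{0,1\}^*\times\{0,1\}^*\to\mathbb R$ if $f(\langle G,\mathsf I,\mathsf O\rangle)=\sum_{v\in V}\lambda(\mathsf I(v),\mathsf O(v))$ for every IO graph in $\Pi$. *)

(* Defs.v *)
From HB Require Import structures.
From mathcomp Require Import all_boot all_order all_algebra.
From mathcomp Require Import all_classical reals ereal.
Set Implicit Arguments. Unset Strict Implicit. Unset Printing Implicit Defensive.
Import Order.TTheory GRing.Theory Num.Theory.
Local Open Scope ring_scope.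

Notation bits := (seq bool).

(* A finite, connected, simple, undirected, nonempty graph with port
   numbering: node v lists its neighbours in the order of its ports
   (port i of v leads to the i-th element of padj v). *)
Record pgraph := PGraph {
  gn : nat;
  padj : 'I_gn -> seq 'I_gn;
  padj_uniq : forall v, uniq (padj v);
  padj_irrefl : forall v, v \notin padj v;
  padj_sym : forall u v, (u \in padj v) = (v \in padj u);
  padj_conn : forall u v, connect (fun x y => y \in padj x) u v;
  gn_pos : (0 < gn)%N }.

Record cgraph (St : Type) := CGraph { cg : pgraph; cstate : 'I_(gn (cg)) -> St }.
Arguments CGraph {St}.
Arguments cstate {St} c _.

(* Input graphs: states are inputs; IO graphs: states are (input, output)
   pairs (the concatenation I(v).O(v), kept as a pair). *)
Definition igraph := cgraph bits.
Definition iograph := cgraph (bits * bits).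

Definition mkIO (Gi : igraph) (O : 'I_(gn (cg Gi)) -> bits) : iograph :=
  CGraph (cg Gi) (fun v => (cstate Gi v, O v)).
Definition inp (C : iograph) : igraph := CGraph (cg C) (fun v => (cstate C v).1).
Definition outp (C : iograph) (v : 'I_(gn (cg C))) : bits := (cstate C v).2.
Arguments mkIO : clear implicits.
Arguments outp : clear implicits.

Definition labeling St (C : cgraph St) := 'I_(gn (cg C)) -> bits.
Definition verifier St := St -> bits -> seq bits -> bool.
Definition prover St := forall C : cgraph St, labeling C.

Definition accepts St (ver : verifier St) (C : cgraph St) (L : labeling C) :=
  forall v, ver (cstate C v) (L v) [seq L u | u <- padj v].
Arguments accepts {St} ver C L.

Definition is_gpls St (U FY FN : cgraph St -> Prop)
    (pr : prover St) (ver : verifier St) : Prop :=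
  (forall C, U C -> FY C -> accepts ver C (pr C)) /\
  (forall C, U C -> FN C -> forall L : labeling C, ~ accepts ver C L).

Definition proof_size_le St (U FY : cgraph St -> Prop) (pr : prover St)
    (bnd : cgraph St -> nat) : Prop :=
  forall C, U C -> FY C -> forall v, (size (pr C v) <= bnd C)%N.

Definition nodes St (C : cgraph St) : nat := gn (cg C).

Section Problems.
Variable R : realType.
Variables (Pi : iograph -> Prop) (f : iograph -> int).

Definition legal (Gi : igraph) : Prop := exists O, Pi (mkIO Gi O).

Definition fvals (Gi : igraph) : set (\bar R) :=
  [set ((f (mkIO Gi O))%:~R)%:E | O in [set O | Pi (mkIO Gi O)]].

Definition OPT (ismin : bool) (Gi : igraph) : \bar R :=
  if ismin then ereal_inf (fvals Gi) else ereal_sup (fvals Gi).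

Definition fE (C : iograph) : \bar R := ((f C)%:~R)%:E.

Definition U_io (C : iograph) : Prop := legal (inp C).

Definition feasibility_scheme (pr : prover (bits * bits))
    (ver : verifier (bits * bits)) (p : nat -> nat) : Prop :=
  is_gpls U_io Pi (fun C => ~ Pi C) pr ver /\
  proof_size_le U_io Pi pr (fun C => p (nodes C)).

Definition APLS_Y ismin (C : iograph) : Prop :=
  Pi C /\ fE C = OPT ismin (inp C).
Definition APLS_N ismin (alpha : R) (C : iograph) : Prop :=
  ~ (Pi C /\ (if ismin then (fE C <= alpha%:E * OPT ismin (inp C))%E
                        else (fE C >= OPT ismin (inp C) / alpha%:E)%E)).
Definition is_APLS ismin alpha pr ver : Prop :=
  is_gpls U_io (APLS_Y ismin) (APLS_N ismin alpha) pr ver.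

Definition ADPLS_Y ismin (k : int) (Gi : igraph) : Prop :=
  if ismin then (OPT ismin Gi >= (k%:~R)%:E)%E
  else (OPT ismin Gi <= (k%:~R)%:E)%E.
Definition ADPLS_N ismin (alpha : R) (k : int) (Gi : igraph) : Prop :=
  if ismin then (OPT ismin Gi < (k%:~R / alpha)%:E)%E
  else (OPT ismin Gi > (alpha * k%:~R)%:E)%E.
Definition ADPLS ismin alpha k (pr : prover bits) (ver : verifier bits)
    (r : nat -> nat) : Prop :=
  is_gpls legal (ADPLS_Y ismin k) (ADPLS_N ismin alpha k) pr ver /\
  proof_size_le legal (ADPLS_Y ismin k) pr (fun Gi => r (nodes Gi)).

(* Identified: the input of each node encodes (via some fixed decoding
   function idf) an identifier of O(log n) bits, unique in the graph. *)
Definition identified : Prop :=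
  exists (idf : bits -> bits) (c : nat), forall C, Pi C ->
    injective (fun v : 'I_(nodes C) => idf (cstate C v).1) /\
    forall v : 'I_(nodes C),
      (size (idf (cstate C v).1) <= c * trunc_log 2 (nodes C) + c)%N.

Definition decomposable (lambda : bits -> bits -> R) : Prop :=
  forall C, Pi C ->
    (f C)%:~R = \sum_(v < nodes C) lambda (cstate C v).1 (cstate C v).2.

End Problems.

(* x is representable with (at most) b bits: a fixed-point binary number
   with a b-bit magnitude m and e <= b fractional bits (plus a sign). *)
Definition repr_bits (R : realType) (x : R) (b : nat) : Prop :=
  exists (m : int) (e : nat),
    (e <= b)%N /\ (`|m| < 2 ^ b)%N /\ x = m%:~R / 2%:R ^+ e.

(* Main.v *)
Require Import Defs.
From HB Require Import structures.
From mathcomp Require Import all_boot all_order all_algebra.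
From mathcomp Require Import all_classical reals ereal.
From mathcomp Require Import zify.
Import Order.TTheory GRing.Theory Num.Theory.
Local Open Scope ring_scope.

Fixpoint enc1 (s : bits) : bits :=
  if s is b :: s' then true :: b :: enc1 s' else [:: false].
Definition enc (l : seq bits) : bits := flatten (map enc1 l).
Fixpoint dec (l : bits) : seq bits :=
  match l with
  | false :: l' => [::] :: dec l'
  | true :: b :: l' => match dec l' with [::] => [:: [:: b]] | s :: r => (b :: s) :: r end
  | _ => [::]
  end.

Lemma dec_enc1 s rest : dec (enc1 s ++ rest) = s :: dec rest.
Proof. by elim: s => [|b s IH] //=; rewrite IH. Qed.

Lemma dec_enc l : dec (enc l) = l.
Proof. by elim: l => [|s l IH] //=; rewrite /enc /= dec_enc1 -/(enc l) IH. Qed.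

Lemma size_enc1 s : size (enc1 s) = (2 * size s).+1.
Proof. elim: s => [|b s IH] //=; rewrite IH; lia. Qed.

Lemma size_enc l : size (enc l) = (\sum_(s <- l) (2 * size s).+1)%N.
Proof.
elim: l => [|s l IH]; first by rewrite big_nil.
by rewrite /enc /= size_cat -/(enc l) IH big_cons size_enc1.
Qed.

Fixpoint encNf (fuel n : nat) : bits :=
  if fuel is fu.+1 then (if n is 0 then [::] else (n %% 2 == 1)%N :: encNf fu (n %/ 2))
  else [::].
Definition encN n := encNf n n.
Definition decN (s : bits) : nat := foldr (fun (b : bool) acc => b + 2 * acc)%N 0%N s.

Lemma decN_encNf fuel n : (n <= fuel)%N -> decN (encNf fuel n) = n.
Proof.
elim: fuel n => [|fu IH] [|n] //= hn.
rewrite IH; last by lia.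
case: eqP => h /=; lia.
Qed.

Lemma decN_encN n : decN (encN n) = n.
Proof. exact: decN_encNf. Qed.

Lemma size_encNf fuel n k : (n < 2 ^ k)%N -> (size (encNf fuel n) <= k)%N.
Proof.
elim: fuel n k => [|fu IH] [|n] k //= hn.
case: k hn => [|k] hn; first by rewrite expn0 in hn.
rewrite ltnS; apply: IH; rewrite expnS in hn; lia.
Qed.

Lemma size_encN n k : (n < 2 ^ k)%N -> (size (encN n) <= k)%N.
Proof. exact: size_encNf. Qed.

Definition encI (z : int) : bits := (z < 0) :: encN `|z|%N.
Definition decI (s : bits) : int :=
  match s with b :: s' => if b then - ((decN s')%:Z) else (decN s')%:Z | [::] => 0 end.

Lemma decI_encI z : decI (encI z) = z.
Proof.
rewrite /encI /= decN_encN; case: ltrP => h.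
  by rewrite abszE ltr0_norm ?opprK.
by rewrite abszE ger0_norm.
Qed.

Lemma size_encI z k : (`|z| < 2 ^ k)%N -> (size (encI z) <= k.+1)%N.
Proof. by move=> h; rewrite /= ltnS size_encN. Qed.
Set Implicit Arguments. Unset Strict Implicit. Unset Printing Implicit Defensive.
Section Graph.
Variable G : pgraph.
Local Notation n := (gn G).
Local Notation T := ('I_n).
Definition groot : T := Ordinal (gn_pos G).
Local Notation e := (fun x y : T => y \in padj x).

Lemma const_conn (X : Type) (g : T -> X) :
  (forall u v, v \in padj u -> g v = g u) -> forall u v, g u = g v.
Proof.
move=> h u v; have /connectP [q hq ->] := padj_conn u v.
elim: q u hq => [|x q IH] u //= /andP [hx hq].
by rewrite -(IH x hq) (h u x).
Qed.

Definition distP (v : T) (k : nat) : bool :=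
  `[< exists q : seq T, [/\ path e groot q, last groot q = v & size q = k] >].

Lemma ex_dist v : exists k, distP v k.
Proof.
have /connectP [q hq hv] := padj_conn groot v.
by exists (size q); apply/asboolP; exists q.
Qed.

Definition dist v := ex_minn (ex_dist v).

Lemma distP_dist v : distP v (dist v).
Proof. by rewrite /dist; case: ex_minnP. Qed.

Lemma dist_min v k : distP v k -> (dist v <= k)%N.
Proof. by rewrite /dist; case: ex_minnP => m _ hm /hm. Qed.

Lemma dist_root : dist groot = 0%N.
Proof.
apply/eqP; rewrite -leqn0; apply: dist_min; apply/asboolP; by exists [::].
Qed.

Lemma dist0 v : dist v = 0%N -> v = groot.
Proof.
move=> h; have /asboolP [q [_ hl hs]] := distP_dist v.
by move: hs; rewrite h => /size0nil hq; rewrite -hl hq.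
Qed.

Lemma dist_lt v : (dist v < n)%N.
Proof.
have /asboolP [q [hq hl _]] := distP_dist v.
rewrite -hl; case/shortenP: hq => q' hq' hu _.
have : (size (groot :: q') <= size (enum T))%N.
  by apply: uniq_leq_size => // x _; rewrite mem_enum.
rewrite size_enum_ord /= => hs.
have : (dist (last groot q') <= size q')%N.
  by apply: dist_min; apply/asboolP; exists q'.
by move=> h1; apply: (leq_ltn_trans h1 hs).
Qed.

Lemma dist_par v : v != groot -> exists u, (u \in padj v) && (dist u == (dist v).-1)%N.
Proof.
move=> hv; have /asboolP [q [hq hl hs]] := distP_dist v.
case/lastP: q hq hl hs => [|q x] hq hl hs.
  by move: hv; rewrite -hl eqxx.
rewrite last_rcons in hl; subst x.
move: hq; rewrite rcons_path => /andP [hq hx].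
exists (last groot q); rewrite -padj_sym hx /=.
have h1 : (dist (last groot q) <= size q)%N.
  by apply: dist_min; apply/asboolP; exists q.
have /asboolP [q2 [hq2 hl2 hs2]] := distP_dist (last groot q).
have h2 : (dist v <= (size q2).+1)%N.
  apply: dist_min; apply/asboolP; exists (rcons q2 v); split.
  - by rewrite rcons_path hq2 hl2 hx.
  - by rewrite last_rcons.
  - by rewrite size_rcons.
move: hs; rewrite size_rcons => hs; apply/eqP; lia.
Qed.

Definition gpa (v : T) : T :=
  if v == groot then groot else
  if [pick u | (u \in padj v) && (dist u == (dist v).-1)%N] is Some u then u else groot.

Lemma gpa_adj v : v != groot -> gpa v \in padj v.
Proof.
move=> hv; rewrite /gpa (negbTE hv); case: pickP => [u /andP [] //|h].
by case: (dist_par hv) => u; rewrite h.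
Qed.

Lemma dist_gpa v : dist (gpa v) = (dist v).-1.
Proof.
rewrite /gpa; case: eqP => [->|/eqP hv]; first by rewrite dist_root.
case: pickP => [u /andP [_ /eqP] //|h].
by case: (dist_par hv) => u; rewrite h.
Qed.

Lemma dist_iter j v : dist (iter j gpa v) = (dist v - j)%N.
Proof. elim: j => [|j IH] /=; first by rewrite subn0. by rewrite dist_gpa IH; lia. Qed.

Definition anc (v u : T) : bool := (dist v <= dist u)%N && (iter (dist u - dist v) gpa u == v).
Definition chd (v u : T) : bool := (u != groot) && (gpa u == v).

Lemma anc_refl v : anc v v.
Proof. by rewrite /anc leqnn subnn eqxx. Qed.

Lemma anc_root u : anc groot u.
Proof.
rewrite /anc dist_root leq0n subn0 /=; apply/eqP/dist0.
by rewrite dist_iter subnn.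
Qed.

Lemma dist_chd v c : chd v c -> dist c = (dist v).+1.
Proof.
case/andP => hc /eqP <-; rewrite dist_gpa.
have : dist c <> 0%N by move=> /dist0 h; move: hc; rewrite h eqxx.
lia.
Qed.

Lemma chd_adj v c : chd v c -> c \in padj v.
Proof. by case/andP => hc /eqP <-; rewrite padj_sym gpa_adj. Qed.

Variable (R : zmodType) (lam : T -> R).

Lemma sum_adj2 v (P Q : pred T) (F : T -> R) :
  (forall u, u \in padj v -> P u = Q u) -> (forall u, Q u -> u \in padj v) ->
  \sum_(u <- padj v | P u) F u = \sum_(u | Q u) F u.
Proof.
move=> hPQ hQ; rewrite big_seq_cond (eq_bigl (fun u => (u \in padj v) && Q u)); last first.
  by move=> u; case: (boolP (u \in padj v)) => h //=; rewrite hPQ.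
rewrite -big_seq_cond big_mkcond big_uniq ?padj_uniq // -big_mkcondr.
apply: eq_bigl => u; apply/andP/idP => [[]//| h]; split=> //; exact: hQ.
Qed.

Definition Ssum (v : T) : R := \sum_(u | anc v u) lam u.

Lemma Ssum_rec v : Ssum v = lam v + \sum_(c | chd v c) Ssum c.
Proof.
rewrite /Ssum (bigD1 v) ?anc_refl //=; congr (_ + _).
rewrite (partition_big (fun u => iter (dist u - dist v).-1 gpa u) (chd v)).
  apply: eq_bigr => c hc; apply: eq_bigl => u.
  have hdc := dist_chd hc.
  apply/idP/idP.
    case/andP => /andP [/andP [h1 /eqP h2] h3] /eqP h4.
    have h5 : (dist u != dist v).
      by apply/eqP => h; move: h2 h3; rewrite h subnn /= => ->; rewrite eqxx.
    rewrite /anc hdc; apply/andP; split; first by lia.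
    by rewrite -h4; apply/eqP; congr iter; lia.
  case/andP => h1 /eqP h2; rewrite hdc in h1 h2.
  have e1 : (dist u - dist v = (dist u - (dist v).+1).+1)%N by lia.
  rewrite /anc; apply/andP; split; first (apply/andP; split).
  - apply/andP; split; first by lia.
    by rewrite e1 iterS h2; case/andP: hc => _.
  - apply/eqP => h; move: h1; rewrite h; lia.
  - by rewrite e1 /= h2.
move=> u /andP [/andP [h1 /eqP h2] h3].
have h5 : (dist u != dist v).
  by apply/eqP => h; move: h2 h3; rewrite h subnn /= => ->; rewrite eqxx.
have hd : dist (iter (dist u - dist v).-1 gpa u) = (dist v).+1.
  rewrite dist_iter; lia.
rewrite /chd; apply/andP; split.
  by apply/eqP => h; move: hd; rewrite h dist_root.
have e1 : (dist u - dist v = ((dist u - dist v).-1).+1)%N by lia.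
by rewrite -iterS -e1 h2.
Qed.

End Graph.

Section Main.
Variable R : realType.
Variable lambda : bits -> bits -> R.
Variable idf : bits -> bits.
Variable verF : verifier (bits * bits).
Variable verA : int -> verifier bits.
Unset Implicit Arguments.
Variable prF : prover (bits * bits).
Variable prA : int -> prover bits.
Set Implicit Arguments.
Variable f : iograph -> int.

Fixpoint sumpairs (l : seq bits) : R :=
  match l with a :: b :: r => lambda a b + sumpairs r | _ => 0 end.

Definition decR (l : bits) : R :=
  match dec l with
  | [:: true] :: a :: b :: _ => (decI a)%:~R / 2%:R ^+ (decN b)
  | _ :: r => sumpairs r
  | [::] => 0
  end.

Lemma sumpairs_flat (X : Type) (g : X -> bits * bits) (s : seq X) :
  sumpairs (flatten [seq [:: (g x).1; (g x).2] | x <- s]) = \sum_(x <- s) lambda (g x).1 (g x).2.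
Proof. by elim: s => [|x s IH]; rewrite ?big_nil ?big_cons //= IH. Qed.

Definition cmp (i : nat) (x : bits) : bits := nth [::] (dec x) i.

Definition ver (s : bits * bits) (l : bits) (nl : seq bits) : bool :=
  [&& verF s (cmp 0 l) (map (cmp 0) nl),
      verA (decI (cmp 2 l)) s.1 (cmp 1 l) (map (cmp 1) nl),
      all (fun w => (cmp 2 w == cmp 2 l) && (cmp 6 w == cmp 6 l)) nl,
      cmp 3 l == idf s.1,
      (if decN (cmp 5 l) == 0%N then (cmp 3 l == cmp 6 l) && (decR (cmp 7 l) == (decI (cmp 2 l))%:~R)
       else has (fun w => (cmp 3 w == cmp 4 l) && (decN (cmp 5 w) == (decN (cmp 5 l)).-1)) nl) &
      decR (cmp 7 l) == lambda s.1 s.2 +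
        \sum_(w <- nl | (cmp 4 w == cmp 3 l) && (decN (cmp 5 w) == (decN (cmp 5 l)).+1)) decR (cmp 7 w)].

Definition lamC (C : iograph) (u : 'I_(nodes C)) : R := lambda (cstate C u).1 (cstate C u).2.

Definition toint (x : R) : int :=
  if pselect (exists z : int, x = z%:~R) is left h then projT1 (cid h) else 0.

Lemma tointE x : (exists z : int, x = z%:~R) -> (toint x)%:~R = x.
Proof. by rewrite /toint; case: pselect => // h _; case: (cid h) => z /= ->. Qed.

Definition reprP (C : iograph) (H : nat) : bool :=
  `[< forall u : 'I_(nodes C), repr_bits (lamC u) H >].

Definition sumlab (C : iograph) (v : 'I_(nodes C)) : bits :=
  match pselect (exists H, reprP C H) with
  | left h => enc [:: [:: true]; encI (toint (Ssum (@lamC C) v * 2%:R ^+ ex_minn h));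
                     encN (ex_minn h)]
  | right _ => enc ([:: false] :: flatten [seq [:: (cstate C u).1; (cstate C u).2]
                                           | u <- enum (anc v)])
  end.

Definition prv : prover (bits * bits) := fun C v =>
  enc [:: prF C v; prA (f C) (inp C) v; encI (f C); idf (cstate C v).1;
          idf (cstate C (gpa v)).1; encN (dist v); idf (cstate C (groot (cg C))).1;
          sumlab v].
Arguments prv : clear implicits.


Lemma map_cmp (X : Type) i (s : seq X) (L : X -> bits) g :
  (forall u, cmp i (L u) = g u) -> map (cmp i) (map L s) = map g s.
Proof. by move=> h; rewrite -map_comp; apply: eq_map => u /=; exact: h. Qed.

Lemma decR_dy a b : decR (enc [:: [:: true]; a; b]) = (decI a)%:~R / 2%:R ^+ decN b.
Proof. by rewrite /decR dec_enc. Qed.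

Lemma decR_ls l : decR (enc ([:: false] :: l)) = sumpairs l.
Proof. by rewrite /decR dec_enc. Qed.

Lemma decR_sumlab (C : iograph) (v : 'I_(nodes C)) :
  decR (sumlab v) = Ssum (@lamC C) v.
Proof.
rewrite /sumlab; case: pselect => h.
  rewrite decR_dy decI_encI decN_encN tointE; first by rewrite mulfK // expf_neq0 // pnatr_eq0.
  have /asboolP hr : reprP C (ex_minn h) by case: ex_minnP.
  rewrite /Ssum mulr_suml; apply: (big_ind (fun x : R => exists z : int, x = z%:~R)) => [|x y [a ->] [b ->]|u _].
  - by exists 0.
  - by exists (a + b); rewrite intrD.
  have [m [e [he [_ hx]]]] := hr u; rewrite hx.
  exists (m * (2 ^ (ex_minn h - e))%N%:Z); rewrite intrM -(subnK he) exprD.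
  rewrite addnK -natrX.
  rewrite mulrCA divfK; last by rewrite pnatr_eq0 expn_eq0.
  by rewrite mulrC -natrX.
rewrite decR_ls (sumpairs_flat (cstate C)) big_enum /=.
done.
Qed.


Definition Ppar (C : iograph) (L : labeling C) (v : 'I_(nodes C)) : 'I_(nodes C) :=
  if [pick u | (u \in padj v) && ((cmp 3 (L u) == cmp 4 (L v)) &&
                 (decN (cmp 5 (L u)) == (decN (cmp 5 (L v))).-1))] is Some u then u else v.

Lemma sound (Pi : iograph -> Prop) (C : iograph) (L : labeling C) :
  (Pi C -> injective (fun v : 'I_(nodes C) => idf (cstate C v).1)) ->
  (Pi C -> (f C)%:~R = \sum_(v < nodes C) lambda (cstate C v).1 (cstate C v).2) ->
  (~ Pi C -> ~ accepts verF C (fun v => cmp 0 (L v))) ->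
  accepts ver C L ->
  Pi C /\ accepts (verA (f C)) (inp C) (fun v => cmp 1 (L v)).
Proof.
move=> hinj hdec hF hacc.
have hPi : Pi C.
  case: (pselect (Pi C)) => // hn; exfalso; apply: (hF hn) => v.
  by case/andP: (hacc v) => h /and5P [_ _ _ _ _]; rewrite -map_comp in h.
split=> //.
have inj := hinj hPi.
have hid v : cmp 3 (L v) = idf (cstate C v).1.
  by case/andP: (hacc v) => _ /and5P [_ _ /eqP -> _ _].
have hnb v u : u \in padj v ->
    (cmp 2 (L u) == cmp 2 (L v)) && (cmp 6 (L u) == cmp 6 (L v)).
  move=> hu; case/andP: (hacc v) => _ /and5P [_ /allP h _ _ _]; exact: (h _ (map_f L hu)).
have c2 u v : cmp 2 (L u) = cmp 2 (L v).
  apply: (const_conn (g := fun v => cmp 2 (L v))) => x y hy.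
  by case/andP: (hnb _ _ hy) => /eqP.
have c6 u v : cmp 6 (L u) = cmp 6 (L v).
  apply: (const_conn (g := fun v => cmp 6 (L v))) => x y hy.
  by case/andP: (hnb _ _ hy) => _ /eqP.
have hpar v : decN (cmp 5 (L v)) != 0%N -> exists u,
    [/\ u \in padj v, cmp 3 (L u) = cmp 4 (L v) & decN (cmp 5 (L u)) = (decN (cmp 5 (L v))).-1].
  move=> hd; case/andP: (hacc v) => _ /and5P [_ _ _ h5 _]; move: h5; rewrite (negbTE hd).
  by case/hasP => w /mapP [u hu ->] /andP [/eqP h1 /eqP h2]; exists u.
have hPp v : decN (cmp 5 (L v)) != 0%N ->
    [/\ Ppar L v \in padj v, cmp 3 (L (Ppar L v)) = cmp 4 (L v) &
        decN (cmp 5 (L (Ppar L v))) = (decN (cmp 5 (L v))).-1].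
  move=> hd; rewrite /Ppar; case: pickP => [u /andP [h1 /andP [/eqP h2 /eqP h3]] // | hn].
  case: (hpar v hd) => u [h1 h2 h3]; move: (hn u); by rewrite h1 h2 h3 !eqxx.
have hroot : exists rho, decN (cmp 5 (L rho)) = 0%N.
  have hm : forall m v, (decN (cmp 5 (L v)) <= m)%N -> exists rho, decN (cmp 5 (L rho)) = 0%N.
    elim=> [|m IH] v hv; first by exists v; lia.
    case: (eqVneq (decN (cmp 5 (L v))) 0%N) => [h|h]; first by exists v.
    case: (hPp v h) => _ _ h3; apply: (IH (Ppar L v)); rewrite h3; lia.
  exact: (hm _ (groot (cg C)) (leqnn _)).
case: hroot => rho hrho.
have hr w : decN (cmp 5 (L w)) = 0%N -> idf (cstate C w).1 = cmp 6 (L rho).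
  move=> hw; case/andP: (hacc w) => _ /and5P [_ _ _ h5 _]; move: h5; rewrite hw /=.
  by case/andP => /eqP h _; rewrite -hid h; apply: c6.
have huniq v : decN (cmp 5 (L v)) = 0%N -> v = rho.
  by move=> hv; apply: inj => /=; rewrite hr // hr.
have hch v w : w \in padj v ->
    ((cmp 4 (L w) == cmp 3 (L v)) && (decN (cmp 5 (L w)) == (decN (cmp 5 (L v))).+1)) =
    (decN (cmp 5 (L w)) != 0%N) && (Ppar L w == v).
  move=> hw; apply/idP/idP.
  - case/andP => /eqP h1 /eqP h2.
    have hd : decN (cmp 5 (L w)) != 0%N by rewrite h2.
    case: (hPp w hd) => _ h3 _; rewrite hd /=; apply/eqP/inj => /=.
    by rewrite -!hid h3 h1.
  - case/andP => hd /eqP hp; case: (hPp w hd) => _ h3 h4.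
    rewrite hp in h3 h4; rewrite -h3 eqxx /= h4; apply/eqP; move/eqP: hd; lia.
have hchadj v w : (decN (cmp 5 (L w)) != 0%N) && (Ppar L w == v) -> w \in padj v.
  by case/andP => hd /eqP <-; case: (hPp w hd) => h1 _ _; rewrite padj_sym.
have hsm v : decR (cmp 7 (L v)) = lamC v +
    \sum_(w | (decN (cmp 5 (L w)) != 0%N) && (Ppar L w == v)) decR (cmp 7 (L w)).
  case/andP: (hacc v) => _ /and5P [_ _ _ _ /eqP ->]; rewrite /lamC; congr (_ + _).
  rewrite big_map; apply: sum_adj2 => [u hu|u hu].
  exact: (hch _ _ hu).
  exact: (hchadj _ _ hu).
have htot : \sum_(v < nodes C) decR (cmp 7 (L v)) =
    \sum_(v < nodes C) lamC v + \sum_(w | decN (cmp 5 (L w)) != 0%N) decR (cmp 7 (L w)).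
  rewrite (eq_bigr _ (fun v _ => hsm v)) big_split /=. congr (_ + _).
  rewrite (eq_bigr (fun v => \sum_w (if (decN (cmp 5 (L w)) != 0%N) && (Ppar L w == v)
                                      then decR (cmp 7 (L w)) else 0))); last first.
    by move=> v _; rewrite big_mkcond.
  rewrite exchange_big /= [RHS]big_mkcond /=; apply: eq_bigr => w _.
  case: (decN (cmp 5 (L w)) != 0%N) => /=; last by rewrite big1.
  by rewrite -big_mkcond /=; apply: (big_pred1 (Ppar L w)) => x /=; rewrite eq_sym.
rewrite (bigID (fun v => decN (cmp 5 (L v)) == 0%N)) /= in htot.
move/addIr: htot.
rewrite (big_pred1 rho); last first.
  by move=> v /=; apply/idP/idP => [/eqP/huniq ->|/eqP ->] //; apply/eqP.
have : decR (cmp 7 (L rho)) = (decI (cmp 2 (L rho)))%:~R.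
  case/andP: (hacc rho) => _ /and5P [_ _ _ h5 _]; move: h5; rewrite hrho /=.
  by case/andP => _ /eqP.
move=> -> hK; have hfK : f C = decI (cmp 2 (L rho)).
  by apply: (@intr_inj R); rewrite hdec // hK.
move=> v /=; case/andP: (hacc v) => _ /and5P [h2 _ _ _ _].
by rewrite -map_comp (c2 v rho) -hfK in h2.
Qed.


Lemma complete (C : iograph) :
  injective (fun v : 'I_(nodes C) => idf (cstate C v).1) ->
  (f C)%:~R = \sum_(v < nodes C) lambda (cstate C v).1 (cstate C v).2 ->
  accepts verF C (prF C) ->
  accepts (verA (f C)) (inp C) (prA (f C) (inp C)) ->
  accepts ver C (prv C).
Proof.
move=> inj hdec hF hA v.
have e0 u : cmp 0 (prv C u) = prF C u by rewrite /cmp /prv dec_enc.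
have e1 u : cmp 1 (prv C u) = prA (f C) (inp C) u by rewrite /cmp /prv dec_enc.
have e2 u : cmp 2 (prv C u) = encI (f C) by rewrite /cmp /prv dec_enc.
have e3 u : cmp 3 (prv C u) = idf (cstate C u).1 by rewrite /cmp /prv dec_enc.
have e4 u : cmp 4 (prv C u) = idf (cstate C (gpa u)).1 by rewrite /cmp /prv dec_enc.
have e5 u : cmp 5 (prv C u) = encN (dist u) by rewrite /cmp /prv dec_enc.
have e6 u : cmp 6 (prv C u) = idf (cstate C (groot (cg C))).1 by rewrite /cmp /prv dec_enc.
have e7 u : cmp 7 (prv C u) = sumlab u by rewrite /cmp /prv dec_enc.
rewrite /ver; apply/andP; split; last (apply/and5P; split).
- by rewrite e0 (map_cmp _ e0); exact: hF.
- by rewrite e2 decI_encI e1 (map_cmp _ e1); exact: hA.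
- by apply/allP => w /mapP [u hu ->]; rewrite !e2 !e6 !eqxx.
- by rewrite e3.
- rewrite e5 decN_encN; case: eqP => hd.
    have hv := dist0 hd; rewrite e3 e6 -hv eqxx /= e7 e2 decI_encI decR_sumlab.
    apply/eqP; rewrite hdec /Ssum hv; apply: eq_bigl => u; exact: anc_root.
  have hv : v != groot (cg C) by apply/eqP => h; apply: hd; rewrite h dist_root.
  apply/hasP; exists (prv C (gpa v)); first by apply: map_f; apply: gpa_adj.
  by rewrite e3 e4 e5 decN_encN dist_gpa !eqxx.
rewrite e7 decR_sumlab e3 e5 decN_encN big_map; apply/eqP; rewrite Ssum_rec.
congr (_ + _); rewrite (sum_adj2 (Q := chd v)).
- by apply: eq_bigr => u _; rewrite e7 decR_sumlab.
- move=> u hu; rewrite e4 e5 decN_encN; apply/idP/idP.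
    case/andP => /eqP h1 /eqP h2; apply/andP; split.
      by apply/eqP => hu0; move: h2; rewrite hu0 dist_root.
    by apply/eqP; exact: inj h1.
  by move=> hc; rewrite (dist_chd hc); case/andP: hc => _ /eqP ->; rewrite !eqxx.
- by move=> u; exact: chd_adj.
Qed.


Lemma lam_bound (x : R) H : repr_bits x H -> `|x| <= (2 ^ H)%:R.
Proof.
case=> m [e [he [hm ->]]].
have h2 : 0 < 2%:R ^+ e :> R by rewrite exprn_gt0.
rewrite normf_div ler_pdivrMr ?normr_gt0 ?gt_eqF //.
apply: (le_trans (y := (2 ^ H)%:R)).
  by rewrite -intr_norm -natr_absz ler_nat ltnW.
apply: ler_peMr => //; rewrite ger0_norm; last exact: ltW.
by rewrite -natrX ler1n expn_gt0.
Qed.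

Lemma sum_bound (C : iograph) H (P : pred 'I_(nodes C)) :
  (forall u, repr_bits (@lamC C u) H) ->
  `|\sum_(u | P u) @lamC C u| <= (nodes C * 2 ^ H)%:R.
Proof.
move=> hr; apply: (le_trans (ler_norm_sum _ _ _)).
apply: (le_trans (y := \sum_(u < nodes C) (2 ^ H)%:R)).
  rewrite [X in _ <= X](bigID P) /= -[X in X <= _]addr0 lerD //.
    by apply: ler_sum => u _; exact: lam_bound.
  by apply: sumr_ge0 => u _; rewrite ler0n.
by rewrite sumr_const card_ord mulnC natrM mulr_natr.
Qed.

Lemma Ssum_int (C : iograph) (v : 'I_(nodes C)) H0 : reprP C H0 ->
  exists z : int, Ssum (@lamC C) v * 2%:R ^+ H0 = z%:~R.
Proof.
move/asboolP=> hr.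
rewrite /Ssum mulr_suml; apply: (big_ind (fun x : R => exists z : int, x = z%:~R)).
- by exists 0.
- by move=> x y [a ->] [b ->]; exists (a + b); rewrite intrD.
move=> u _; have [m [e [he [_ hx]]]] := hr u; rewrite hx.
exists (m * (2 ^ (H0 - e))%N%:Z); rewrite intrM -(subnK he) exprD.
rewrite addnK -natrX.
rewrite mulrCA divfK; last by rewrite pnatr_eq0 expn_eq0.
by rewrite mulrC -natrX.
Qed.

Lemma size_prv (C : iograph) (c0 p r H : nat) (v : 'I_(nodes C)) :
  (size (prF C v) <= p)%N -> (size (prA (f C) (inp C) v) <= r)%N ->
  (forall u : 'I_(nodes C), size (idf (cstate C u).1) <= c0 * trunc_log 2 (nodes C) + c0)%N ->
  (f C)%:~R = \sum_(u < nodes C) lambda (cstate C u).1 (cstate C u).2 ->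
  (forall u : 'I_(nodes C), repr_bits (lambda (cstate C u).1 (cstate C u).2) H) ->
  (size (prv C v) <= 2 * (p + r + (trunc_log 2 (nodes C) + H + 2) +
       3 * (c0 * trunc_log 2 (nodes C) + c0) + (trunc_log 2 (nodes C) + 1) +
       (3 + (2 * (trunc_log 2 (nodes C) + 2 * H + 2) + 1) + (2 * H + 1))) + 8)%N.
Proof.
move=> hp hr hid hdec hrep.
set tl := trunc_log 2 (nodes C).
have hn : (nodes C < 2 ^ tl.+1)%N by apply: trunc_log_ltn.
have hn2 : (nodes C * 2 ^ H < 2 ^ (tl.+1 + H))%N by rewrite expnD ltn_mul2r expn_gt0 hn.
have hf : (`|f C| < 2 ^ (tl.+1 + H))%N.
  apply: leq_ltn_trans hn2; rewrite -(ler_nat R) natr_absz intr_norm hdec.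
  exact: (sum_bound xpredT hrep).
have s2 : (size (encI (f C)) <= tl + H + 2)%N.
  have := size_encI _ _ hf; lia.
have s5 : (size (encN (dist v)) <= tl + 1)%N.
  by rewrite addn1; apply: size_encN; apply: ltn_trans hn; exact: dist_lt.
have hex : exists H, reprP C H by exists H; apply/asboolP.
have s7 : (size (sumlab v) <= 3 + (2 * (tl + 2 * H + 2) + 1) + (2 * H + 1))%N.
  rewrite /sumlab; case: pselect => // h.
  have hH0 : (ex_minn h <= H)%N.
    by case: ex_minnP => m _ hm; apply: hm; apply/asboolP.
  have hrH0 : reprP C (ex_minn h) by case: ex_minnP.
  have /tointE hM := Ssum_int v hrH0.
  set M := toint _ in hM *.
  have hMb : (`|M| < 2 ^ (tl + 2 * H).+1)%N.
    have -> : ((tl + 2 * H).+1 = tl.+1 + H + H)%N by lia.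
    rewrite expnD; apply: (leq_ltn_trans (n := (nodes C * 2 ^ H * 2 ^ H)%N)); last first.
      by rewrite ltn_mul2r expn_gt0.
    rewrite -(ler_nat R) natr_absz intr_norm hM normrM natrM.
    apply: ler_pM => //.
      exact: (sum_bound (anc v) hrep).
    rewrite normrX ger0_norm // natrX; apply: ler_weXn2l => //.
    by rewrite ler1n.
  rewrite size_enc !big_cons big_nil /=.
  have := size_encI _ _ hMb; rewrite /= => hb.
  have := size_encN _ _ (leq_ltn_trans hH0 (ltn_expl H (isT : (1 < 2)%N))).
  lia.
rewrite /prv size_enc !big_cons big_nil.
have := hid v; have := hid (gpa v); have := hid (groot (cg C)).
lia.
Qed.
End Main.

Lemma ereal_fin (R : realType) (ismin : bool) (alpha K : R) (O : \bar R) : 1 <= alpha ->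
  ~ (if ismin then (O < (K / alpha)%:E)%E else (O > (alpha * K)%:E)%E) ->
  if ismin then (K%:E <= alpha%:E * O)%E else (K%:E >= O / alpha%:E)%E.
Proof.
move=> ha; have a0 : 0 < alpha by apply: lt_le_trans ha.
case: ismin => /negP; rewrite -leNgt.
  case: O => [x| |] /=.
  - by rewrite lee_fin ler_pdivrMr // -EFinM lee_fin mulrC.
  - by move=> _; rewrite mulry gtr0_sg // mul1e leey.
  - by rewrite leeNy_eq.
case: O => [x| |] /=.
- by rewrite lee_fin inver gt_eqF // -EFinM lee_fin mulrC -ler_pdivrMr // mulrC.
- by rewrite leye_eq.
- by move=> _; rewrite inver gt_eqF // mulNyr gtr0_sg ?invr_gt0 // mul1e leNye.
Qed.

Unset Implicit Arguments.

Theorem lemma4p1 (R : realType) (ismin : bool)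
    (Pi : iograph -> Prop) (f : iograph -> int)
    (lambda : bits -> bits -> R) (alpha : R) (p r : nat -> nat) :
  identified Pi ->
  decomposable Pi f lambda ->
  1 <= alpha ->
  (exists pr ver, feasibility_scheme Pi pr ver p) ->
  (forall k : int, exists pr ver, @ADPLS R Pi f ismin alpha k pr ver r) ->
  exists (pr : prover (bits * bits)) (ver : verifier (bits * bits)) (c : nat),
    @is_APLS R Pi f ismin alpha pr ver /\
    forall C : iograph, U_io Pi C -> APLS_Y R Pi f ismin C ->
    forall H : nat,
      (forall v : 'I_(nodes C), repr_bits (lambda (cstate C v).1 (cstate C v).2) H) ->
      forall v : 'I_(nodes C),
        (size (pr C v) <=
           c * (p (nodes C) + r (nodes C) + trunc_log 2 (nodes C) + H) + c)%N.
Proof.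
move=> [idf [c0 hid]] hdec halpha [prF [verF [[hFc hFs] hFsz]]] hADP.
have hADP' : forall k : int, exists pv : prover bits * verifier bits,
    @ADPLS R Pi f ismin alpha k pv.1 pv.2 r.
  by move=> k; case: (hADP k) => pr [vr h]; exists (pr, vr).
case: (boolp.choice hADP') => g hg.
pose prA k := (g k).1; pose verA k := (g k).2.
have hY C : U_io Pi C -> APLS_Y R Pi f ismin C -> @ADPLS_Y R Pi f ismin (f C) (inp C).
  move=> _ [_ hopt]; rewrite /ADPLS_Y -hopt /fE.
  by case: ifP.
exists (prv lambda idf prF prA f), (ver lambda idf verF verA), (36 + 6 * c0)%N.
split; first split.
- move=> C hU hy; have [hPi _] := hy.
  apply: complete.
  + exact: (hid C hPi).1.
  + exact: hdec C hPi.
  + exact: hFc C hU hPi.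
  + exact: (hg (f C)).1.1 (inp C) hU (hY C hU hy).
- move=> C hU hN L hacc.
  have [hPi hA] := sound (fun hPi => (hid C hPi).1) (hdec C)
    (fun hn => hFs C hU hn _) hacc.
  apply: hN; split=> //.
  apply: ereal_fin => // hn.
  exact: ((hg (f C)).1.2 (inp C) hU hn _ hA).
move=> C hU hy H hrep v; have [hPi _] := hy.
have := @size_prv R lambda idf prF prA f C c0 (p (nodes C)) (r (nodes C)) H v (hFsz C hU hPi v)
  ((hg (f C)).2 (inp C) hU (hY C hU hy) v) (hid C hPi).2 (hdec C hPi) hrep.
nia.
Qed.
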